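(* Let $0<\alpha<1$ and $\gamma>0$. Consider the heterogeneous Galton–Watson process $\{Z_t\}_{t\ge 0}$ with $Z_0=1$, in which each individual of generation $t$ independently has either $2$ offspring, with probability $\alpha/(1+t)^{\gamma}$, or $0$ offspring, with probability $1-\alpha/(1+t)^{\gamma}$. Let $T_{ex}=\min\{t: Z_t=0\}$ be the extinction time. Then there exists a constant $C_0>0$, depending only on $\alpha$ and $\gamma$, such that for every integer $t\ge 1$, $$\mathbb{P}(T_{ex}>t) < C_0\left(\frac{t^{\gamma}}{2\alpha\, e^{\gamma}}\right)^{-t}.$$
   Context: This Galton–Watson process models the tree-generating prior of Bayesian CART/BART. In that prior, a node at depth $t$ of a binary tree is split into two children with probability $\alpha/(1+t)^\gamma$, and the root has depth $0$. The variable $Z_t$ is the number of nodes at depth $t$. *)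

(* Defs.v *)
From Stdlib Require Import Reals Lra Lia Arith.
Open Scope R_scope.
Local Open Scope bool_scope.

Definition split_prob (alpha gamma : R) (t : nat) : R :=
  alpha / Rpower (1 + INR t) gamma.

(* One-step transition kernel of the Galton-Watson chain from generation t
   to t+1: from n individuals, each independently has 2 children with
   probability p = split_prob t, else 0.  So Z_{t+1} = 2 * Bin(n, p):
   P(Z_{t+1} = k | Z_t = n) = C(n, k/2) p^(k/2) (1-p)^(n-k/2) if k even and
   k/2 <= n, and 0 otherwise. *)
Definition trans (alpha gamma : R) (t n k : nat) : R :=
  let p := split_prob alpha gamma t in
  if andb (Nat.even k) (Nat.div2 k <=? n)%nat then
    C n (Nat.div2 k) * p ^ (Nat.div2 k) * (1 - p) ^ (n - Nat.div2 k)
  else 0.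

(* alive t k = P(Z_t = k and Z_s <> 0 for all s <= t), with Z_0 = 1.
   Since Z_t <= 2^t, the sum over states n ranges over 0..2^t. *)
Fixpoint alive (alpha gamma : R) (t k : nat) : R :=
  match t with
  | O => if Nat.eqb k 1 then 1 else 0
  | S s =>
      if Nat.eqb k 0 then 0
      else sum_f_R0 (fun n => alive alpha gamma s n * trans alpha gamma s n k)
                    (2 ^ s)
  end.

(* P(T_ex > t) = P(Z_s <> 0 for all s = 0..t) = sum_{k>=1} alive t k
   (alive t 0 = 0 and Z_t <= 2^t). *)
Definition surv_prob (alpha gamma : R) (t : nat) : R :=
  sum_f_R0 (fun k => alive alpha gamma t k) (2 ^ t).

(* Main.v *)
Require Import Defs.
From Stdlib Require Import Reals Lra Lia Factorial.
Open Scope R_scope.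

Lemma split_prob_bounds a g t : 0 < a < 1 -> 0 < g ->
  0 < split_prob a g t < 1.
Proof.
  intros Ha Hg. unfold split_prob, Rpower.
  assert (H1 : 0 <= ln (1 + INR t)).
  { pose proof (pos_INR t). destruct (Req_dec (INR t) 0) as [E|E].
    - rewrite E, Rplus_0_r, ln_1; lra.
    - rewrite <- ln_1. left. apply ln_increasing; lra. }
  assert (H2 : 1 <= exp (g * ln (1 + INR t))).
  { pose proof (exp_ineq1_le (g * ln (1 + INR t))). nra. }
  split.
  - apply Rdiv_lt_0_compat; lra.
  - apply (Rmult_lt_reg_r (exp (g * ln (1 + INR t)))); [lra|].
    unfold Rdiv. rewrite Rmult_assoc, Rinv_l by lra. nra.
Qed.

Lemma C_pos n k : 0 < C n k.
Proof.
  unfold C. apply Rdiv_lt_0_compat. apply INR_fact_lt_0.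
  apply Rmult_lt_0_compat; apply INR_fact_lt_0.
Qed.

Lemma trans_nonneg a g s n k : 0 < a < 1 -> 0 < g -> 0 <= trans a g s n k.
Proof.
  intros Ha Hg. unfold trans. pose proof (split_prob_bounds a g s Ha Hg).
  destruct (_ && _)%bool; [|lra].
  apply Rmult_le_pos; [apply Rmult_le_pos|]; try apply pow_le; try lra.
  left; apply C_pos.
Qed.

Lemma alive_nonneg a g t k : 0 < a < 1 -> 0 < g -> 0 <= alive a g t k.
Proof.
  intros Ha Hg. revert k; induction t; intro k; simpl.
  - destruct (k =? 1)%nat; lra.
  - destruct (k =? 0)%nat; [lra|]. apply cond_pos_sum. intro n.
    apply Rmult_le_pos; auto. apply trans_nonneg; auto.
Qed.

Lemma C_shift m i : (i <= m)%nat -> INR (S i) * C (S m) (S i) = INR (S m) * C m i.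
Proof.
  intro H. unfold C. replace (S m - S i)%nat with (m - i)%nat by lia.
  rewrite !fact_simpl, !mult_INR.
  pose proof (INR_fact_lt_0 i). pose proof (INR_fact_lt_0 m). pose proof (INR_fact_lt_0 (m-i)).
  pose proof (pos_INR i). rewrite S_INR. field. repeat split; lra.
Qed.

Lemma binom_mean n p : sum_f_R0 (fun j => INR j * (C n j * p ^ j * (1 - p) ^ (n - j))) n
  = INR n * p.
Proof.
  destruct n as [|m].
  - simpl. ring.
  - rewrite decomp_sum by lia. simpl pred.
    rewrite (sum_eq _ (fun i => (C m i * p ^ i * (1 - p) ^ (m - i)) * (INR (S m) * p))).
    + rewrite <- scal_sum, <- binomial. replace (p + (1 - p)) with 1 by ring.
      rewrite pow1. simpl. ring.
    + intros i Hi. replace (S m - S i)%nat with (m - i)%nat by lia.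
      rewrite <- !Rmult_assoc, C_shift by exact Hi. simpl. ring.
Qed.

Lemma sum_pairs f m : sum_f_R0 f (S (2 * m)) = sum_f_R0 (fun j => f (2 * j)%nat + f (S (2 * j))) m.
Proof.
  induction m.
  - simpl. ring.
  - replace (S (2 * S m)) with (S (S (S (2 * m)))) by lia.
    rewrite tech5, tech5, IHm. replace (S (S (2 * m))) with (2 * S m)%nat by lia.
    rewrite tech5. replace (S (2 * S m)) with (S (S (S (2 * m)))) by lia. ring.
Qed.

Lemma sum_tail_zero g n m : (n <= m)%nat -> (forall j, (n < j)%nat -> g j = 0) ->
  sum_f_R0 g m = sum_f_R0 g n.
Proof.
  intros H Hz. induction H; auto.
  rewrite tech5, IHle, Hz by lia. ring.
Qed.

Lemma trans_mean a g s n m : 0 < a < 1 -> 0 < g -> (n <= m)%nat ->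
  sum_f_R0 (fun k => INR k * trans a g s n k) (2 * m) <= 2 * (INR n * split_prob a g s).
Proof.
  intros Ha Hg Hnm.
  apply Rle_trans with (sum_f_R0 (fun k => INR k * trans a g s n k) (S (2 * m))).
  { rewrite tech5. pose proof (trans_nonneg a g s n (S (2*m)) Ha Hg).
    pose proof (pos_INR (S (2*m))). nra. }
  rewrite sum_pairs.
  set (B := fun j => INR j * (C n j * split_prob a g s ^ j * (1 - split_prob a g s) ^ (n - j))).
  rewrite (sum_eq _ (fun j => 2 * (if (j <=? n)%nat then B j else 0))).
  2:{ intros j Hj. unfold trans.
      rewrite Nat.div2_double, Nat.even_mul.
      replace (Nat.even (S (2 * j))) with false.
      2:{ rewrite Nat.even_succ, Nat.odd_mul. reflexivity. }
      simpl (Nat.even 2 || _)%bool. simpl andb. unfold B.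
      destruct (j <=? n)%nat; rewrite mult_INR; simpl (INR 2); ring. }
  rewrite (sum_eq _ (fun j => (if (j <=? n)%nat then B j else 0) * 2)) by (intros; ring).
  rewrite <- scal_sum.
  apply Rmult_le_compat_l; [lra|].
  rewrite (sum_tail_zero _ n m Hnm).
  2:{ intros j Hj. assert ((j <=? n)%nat = false) as -> by (apply Nat.leb_gt; lia). reflexivity. }
  rewrite (sum_eq _ B).
  2:{ intros j Hj. assert ((j <=? n)%nat = true) as -> by (apply Nat.leb_le; lia). reflexivity. }
  unfold B. rewrite binom_mean. lra.
Qed.

Lemma sum_swap (f : nat -> nat -> R) K N :
  sum_f_R0 (fun k => sum_f_R0 (fun n => f k n) N) K =
  sum_f_R0 (fun n => sum_f_R0 (fun k => f k n) K) N.
Proof.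
  induction K.
  - simpl. reflexivity.
  - rewrite tech5, IHK, <- sum_plus. apply sum_eq. intros. rewrite tech5. reflexivity.
Qed.

Definition M a g t := sum_f_R0 (fun k => INR k * alive a g t k) (2 ^ t).

Lemma M_step a g s : 0 < a < 1 -> 0 < g ->
  M a g (S s) <= 2 * split_prob a g s * M a g s.
Proof.
  intros Ha Hg. unfold M. simpl alive.
  rewrite (sum_eq _ (fun k => sum_f_R0 (fun n => alive a g s n * (INR k * trans a g s n k)) (2 ^ s))).
  2:{ intros k _. destruct (k =? 0)%nat eqn:E.
      - apply Nat.eqb_eq in E. subst. simpl.
        rewrite (sum_eq _ (fun _ => 0 * 1)) by (intros; ring). rewrite <- scal_sum, sum_cte. ring.
      - rewrite scal_sum. apply sum_eq; intros; ring. }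
  rewrite sum_swap.
  rewrite scal_sum. apply sum_Rle. intros n Hn.
  rewrite (sum_eq _ (fun k => (INR k * trans a g s n k) * alive a g s n)) by (intros; ring).
  rewrite <- scal_sum.
  replace (2 ^ S s)%nat with (2 * 2 ^ s)%nat by reflexivity.
  pose proof (trans_mean a g s n (2 ^ s) Ha Hg Hn).
  pose proof (alive_nonneg a g s n Ha Hg).
  apply Rle_trans with (alive a g s n * (2 * (INR n * split_prob a g s))).
  - apply Rmult_le_compat_l; auto.
  - lra.
Qed.

Lemma surv_le_M a g t : 0 < a < 1 -> 0 < g -> surv_prob a g t <= M a g t.
Proof.
  intros Ha Hg. unfold surv_prob, M. apply sum_Rle. intros k _.
  pose proof (alive_nonneg a g t k Ha Hg).
  destruct k.
  - destruct t; simpl; [lra|]. lra.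
  - rewrite S_INR. pose proof (pos_INR k). nra.
Qed.

Lemma ln_le' x y : 0 < x -> x <= y -> ln x <= ln y.
Proof.
  intros Hx [H|H]. left; apply ln_increasing; auto. subst; lra.
Qed.

Lemma exp_pow_n x n : exp x ^ n = exp (INR n * x).
Proof.
  rewrite <- Rpower_pow by apply exp_pos. unfold Rpower. rewrite ln_exp. reflexivity.
Qed.

Lemma step_ineq t : (INR t + 1) ^ t <= exp 1 * INR t ^ t.
Proof.
  destruct t as [|t].
  - simpl. pose proof (exp_ineq1_le 1). lra.
  - set (x := INR (S t)). assert (Hx : 0 < x) by (apply lt_0_INR; lia).
    replace (x + 1) with (x * (1 + / x)) by (field; lra).
    rewrite Rpow_mult_distr, (Rmult_comm (exp 1)). apply Rmult_le_compat_l.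
    + apply pow_le; lra.
    + apply Rle_trans with (exp (/ x) ^ S t).
      * apply pow_incr. split. assert (0 < / x) by (apply Rinv_0_lt_compat; lra). lra.
        apply exp_ineq1_le.
      * rewrite exp_pow_n. fold x. replace (x * / x) with 1 by (field; lra). lra.
Qed.

Lemma stirling t : INR t ^ t <= INR (fact t) * exp (INR t).
Proof.
  induction t.
  - simpl. rewrite exp_0. lra.
  - rewrite fact_simpl, mult_INR, S_INR. simpl pow.
    rewrite exp_plus.
    pose proof (step_ineq t). pose proof (pos_INR t).
    assert (0 <= INR t ^ t) by (apply pow_le; lra).
    pose proof (exp_pos 1).
    apply Rle_trans with ((INR t + 1) * (exp 1 * INR t ^ t)).
    + apply Rmult_le_compat_l; lra.
    + apply Rle_trans with ((INR t + 1) * (exp 1 * (INR (fact t) * exp (INR t)))).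
      * apply Rmult_le_compat_l; [lra|]. apply Rmult_le_compat_l; lra.
      * right; ring.
Qed.

Lemma M_bound a g t : 0 < a < 1 -> 0 < g ->
  M a g t <= (2 * a) ^ t * exp (- g * ln (INR (fact t))).
Proof.
  intros Ha Hg. induction t.
  - unfold M. simpl. rewrite ln_1. replace (-g*0) with 0 by ring. rewrite exp_0. lra.
  - apply Rle_trans with (2 * split_prob a g t * M a g t). apply M_step; auto.
    pose proof (split_prob_bounds a g t Ha Hg).
    apply Rle_trans with (2 * split_prob a g t * ((2 * a) ^ t * exp (- g * ln (INR (fact t))))).
    + apply Rmult_le_compat_l; lra.
    + right. unfold split_prob, Rpower. rewrite fact_simpl, mult_INR.
      rewrite ln_mult by (apply INR_fact_lt_0 || (apply lt_0_INR; lia)).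
      rewrite S_INR, (Rplus_comm (INR t) 1).
      replace (- g * (ln (1 + INR t) + ln (INR (fact t)))) with
        (- (g * ln (1 + INR t)) + (- g * ln (INR (fact t)))) by ring.
      rewrite exp_plus, exp_Ropp. simpl pow. field.
      pose proof (exp_pos (g * ln (1 + INR t))). lra.
Qed.

Lemma exp_le' x y : x <= y -> exp x <= exp y.
Proof. intros [H|H]. left; apply exp_increasing; auto. subst; lra. Qed.

Theorem corollary1 (alpha gamma : R) (Ha : 0 < alpha < 1) (Hg : 0 < gamma) :
  exists C0 : R, 0 < C0 /\
    forall t : nat, (1 <= t)%nat ->
      surv_prob alpha gamma t <
        C0 * Rpower (Rpower (INR t) gamma / (2 * alpha * exp gamma)) (- INR t).
Proof.
  exists 2. split; [lra|]. intros t Ht.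
  set (R0 := Rpower (Rpower (INR t) gamma / (2 * alpha * exp gamma)) (- INR t)).
  assert (HR : 0 < R0) by (unfold R0, Rpower; apply exp_pos).
  enough (surv_prob alpha gamma t <= R0) by lra.
  apply Rle_trans with (M alpha gamma t). apply surv_le_M; auto.
  eapply Rle_trans. apply M_bound; auto.
  assert (Htp : 0 < INR t) by (apply lt_0_INR; lia).
  assert (Hst : INR t * ln (INR t) <= ln (INR (fact t)) + INR t).
  { rewrite <- ln_pow by exact Htp. rewrite <- (ln_exp (INR t)) at 2.
    rewrite <- ln_mult by (apply INR_fact_lt_0 || apply exp_pos).
    apply ln_le'. apply pow_lt; auto. apply stirling. }
  unfold R0, Rpower.
  unfold Rdiv.
  rewrite ln_mult; [| apply exp_pos | apply Rinv_0_lt_compat; apply Rmult_lt_0_compat; [lra|apply exp_pos]].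
  rewrite ln_exp, ln_Rinv by (apply Rmult_lt_0_compat; [lra|apply exp_pos]).
  rewrite ln_mult, ln_exp by (lra || apply exp_pos).
  rewrite <- Rpower_pow by lra. unfold Rpower.
  rewrite <- exp_plus. apply exp_le'.
  nra.
Qed.
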